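(* For all $x_0,x_1\in\mathbb{R}^n$ and any $F'(x_1)\in\partial F(x_1)$, $$F(x_0)-F(x_1)-\langle F'(x_1),x_0-x_1\rangle\le2\left(\frac{2\|A\|^2\mathcal{D}_{v,Y}}{\sigma_v}\right)^{1/2}\|x_0-x_1\|.$$
   Context: $F(x):=\max_{y\in Y}\{\langle Ax,y\rangle-\hat g(y)\}$ for $x\in\mathbb{R}^n$, where $Y\subseteq\mathbb{R}^m$ is a nonempty convex compact set, $\hat g:Y\to\mathbb{R}$ continuous convex, $A:\mathbb{R}^n\to\mathbb{R}^m$ linear. $\mathbb{R}^n$ carries a norm $\|\cdot\|$, $\mathbb{R}^m$ a norm $\|\cdot\|_Y$, and $\|A\|:=\max\{\langle Ax,y\rangle:\|x\|\le1,\|y\|_Y\le1\}$. $v$ is a prox-function of $Y$: differentiable and strongly convex with modulus $\sigma_v$ w.r.t. $\|\cdot\|_Y$; $\mathcal{D}_{v,Y}:=\max_{y,z\in Y}\{v(y)-v(z)-\langle\nabla v(z),y-z\rangle\}$. *)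

(* Defs.v *)
From HB Require Import structures.
From mathcomp Require Import all_boot all_order all_algebra.
From mathcomp Require Import all_classical all_reals all_analysis.
Set Implicit Arguments. Unset Strict Implicit. Unset Printing Implicit Defensive.
Import Order.TTheory GRing.Theory Num.Theory.
Import numFieldNormedType.Exports.
Local Open Scope classical_set_scope.
Local Open Scope ring_scope.

Definition dotv {R : realType} {k : nat} (u w : 'cV[R]_k) : R :=
  \sum_(i < k) u i 0 * w i 0.

Definition is_norm {R : realType} {k : nat} (N : 'cV[R]_k -> R) : Prop :=
  [/\ (forall x, N x = 0 -> x = 0),
      (forall (a : R) x, N (a *: x) = `|a| * N x) &
      (forall x y, N (x + y) <= N x + N y)].

Definition is_max {R : realType} (S : set R) (M : R) : Prop :=
  S M /\ (forall s, S s -> s <= M).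

Definition convex_on {R : realType} {k : nat} (Y : set 'cV[R]_k)
  (f : 'cV[R]_k -> R) : Prop :=
  forall y z (t : R), Y y -> Y z -> 0 <= t <= 1 ->
    f (t *: y + (1 - t) *: z) <= t * f y + (1 - t) * f z.

Definition strongly_convex_on {R : realType} {k : nat} (Y : set 'cV[R]_k)
  (N : 'cV[R]_k -> R) (sigma : R) (f : 'cV[R]_k -> R) : Prop :=
  forall y z (t : R), Y y -> Y z -> 0 <= t <= 1 ->
    f (t *: y + (1 - t) *: z) <=
      t * f y + (1 - t) * f z - sigma / 2 * t * (1 - t) * (N (y - z)) ^+ 2.

Definition subdiff {R : realType} {k : nat} (F : 'cV[R]_k -> R) (x : 'cV[R]_k)
  : set 'cV[R]_k :=
  [set G | forall z, F x + dotv G (z - x) <= F z].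

(* Main.v *)
Require Import Defs.
From HB Require Import structures.
From mathcomp Require Import all_boot all_order all_algebra.
From mathcomp Require Import all_classical all_reals all_analysis.
From mathcomp Require Import ring lra.
Import Order.TTheory GRing.Theory Num.Theory.
Import numFieldNormedType.Exports.
Local Open Scope classical_set_scope.
Local Open Scope ring_scope.
Section H.
Variable R : realType.

Lemma N0 k (N : 'cV[R]_k -> R) : is_norm N -> N 0 = 0.
Proof. case=> _ Hs _; by rewrite -(scale0r (0:'cV[R]_k)) Hs normr0 mul0r. Qed.

Lemma NN k (N : 'cV[R]_k -> R) x : is_norm N -> N (- x) = N x.
Proof. case=> _ Hs _; by rewrite -scaleN1r Hs normrN1 mul1r. Qed.

Lemma Nge0 k (N : 'cV[R]_k -> R) x : is_norm N -> 0 <= N x.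
Proof.
move=> HN; have := HN; case=> _ _ Ht.
have := Ht x (- x); rewrite subrr N0 // NN //.
by move=> h; lra.
Qed.

Lemma dotvBr k (u w1 w2 : 'cV[R]_k) : dotv u (w1 - w2) = dotv u w1 - dotv u w2.
Proof. rewrite /dotv -sumrB; apply: eq_bigr => i _; rewrite !mxE; ring. Qed.
Lemma dotvBl k (u1 u2 w : 'cV[R]_k) : dotv (u1 - u2) w = dotv u1 w - dotv u2 w.
Proof. rewrite /dotv -sumrB; apply: eq_bigr => i _; rewrite !mxE; ring. Qed.
Lemma dotvZl k c (u w : 'cV[R]_k) : dotv (c *: u) w = c * dotv u w.
Proof. rewrite /dotv mulr_sumr; apply: eq_bigr => i _; rewrite !mxE; ring. Qed.
Lemma dotvZr k c (u w : 'cV[R]_k) : dotv u (c *: w) = c * dotv u w.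
Proof. rewrite /dotv mulr_sumr; apply: eq_bigr => i _; rewrite !mxE; ring. Qed.
Lemma dotv0l k (w : 'cV[R]_k) : dotv 0 w = 0.
Proof. rewrite /dotv big1 // => i _; by rewrite mxE mul0r. Qed.
Lemma dotv0r k (w : 'cV[R]_k) : dotv w 0 = 0.
Proof. rewrite /dotv big1 // => i _; by rewrite mxE mulr0. Qed.

Lemma dot_bound n m (Nx : 'cV[R]_n -> R) (NY : 'cV[R]_m -> R) (A : 'M[R]_(m, n)) normA d w :
  is_norm Nx -> is_norm NY ->
  is_max [set r | exists x y, [/\ Nx x <= 1, NY y <= 1 &
                                    r = dotv (A *m x) y]] normA ->
  dotv (A *m d) w <= normA * Nx d * NY w.
Proof.
move=> HX HY [_ Hm].
have HX' := HX; have HY' := HY.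
case: HX' => HX0 HXs _; case: HY' => HY0 HYs _.
have [da|dn] := eqVneq (Nx d) 0.
  by rewrite da mulr0 mul0r (HX0 _ da) mulmx0 dotv0l.
have [wa|wn] := eqVneq (NY w) 0.
  by rewrite wa mulr0 (HY0 _ wa) dotv0r.
have dp : 0 < Nx d by rewrite lt_def dn Nge0.
have wp : 0 < NY w by rewrite lt_def wn Nge0.
have S1 : [set r | exists x y, [/\ Nx x <= 1, NY y <= 1 &
                                    r = dotv (A *m x) y]]
   ((Nx d)^-1 * ((NY w)^-1 * dotv (A *m d) w)).
  exists ((Nx d)^-1 *: d), ((NY w)^-1 *: w); split => //.
  - by rewrite HXs ger0_norm ?mulVf // invr_ge0 ltW.
  - by rewrite HYs ger0_norm ?mulVf // invr_ge0 ltW.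
  - by rewrite -scalemxAr dotvZl dotvZr.
have := Hm _ S1.
rewrite mulrA -invfM ler_pdivrMl ?mulr_gt0 //.
by rewrite mulrC mulrA.
Qed.
End H.
Lemma breg (R : realType) m (NY : 'cV[R]_m -> R) (Y : set 'cV[R]_m) v sigma y z :
  differentiable v z -> 0 < sigma -> strongly_convex_on Y NY sigma v -> Y y -> Y z ->
  sigma / 2 * NY (y - z) ^+ 2 <= v y - v z - 'd v z (y - z).
Proof.
move=> dv sp Hs Yy Yz.
set d := y - z; set c := sigma / 2 * NY d ^+ 2.
suff : 'd v z d <= v y - v z - c by move=> h; lra.
have Hq := @diff_derivable _ _ _ v z d dv.
rewrite /derivable in Hq.
rewrite -deriveE // /derive.
set q := (fun h : R => _) in Hq *.
have Hr : q @ 0^'+ --> lim (q @ 0^').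
  apply: cvg_trans Hq; apply: cvg_app; apply: within_subset => u /= /gt_eqF ->.
  done.
apply/ler_addgt0Pr => e e0.
apply: (cvgr_to_le Hr).
have c0 : 0 <= c by rewrite /c; apply: mulr_ge0; [apply: divr_ge0; lra | apply: sqr_ge0].
have ec : 0 < e / (c + 1) by apply: divr_gt0 => //; lra.
near=> h.
have h0 : 0 < h by near: h; exact: nbhs_right_gt.
have h1 : h < 1 by near: h; apply: nbhs_right_lt; exact: ltr01.
have he : h < e / (c + 1) by near: h; exact: nbhs_right_lt.
rewrite ltr_pdivlMr in he; last lra.
have hc : h * c <= e by nra.
have hhc : h * (h * c) <= h * e by rewrite ler_wpM2l // ltW.
have Hv := Hs y z h Yy Yz.
have E : h *: y + (1 - h) *: z = h *: d + z.
  by apply/matrixP => i j; rewrite /d !mxE; ring.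
rewrite E in Hv.
have {}Hv := Hv ltac:(apply/andP; split; apply: ltW).
rewrite /q /=. change (h^-1 * (v (h *: d + z) - v z) <= v y - v z - c + e). idtac.
rewrite -/d -/c in Hv.
have : v (h *: d + z) <= h * v y + (1 - h) * v z - h * (1 - h) * c.
  by apply: (le_trans (Hv h0 h1)); rewrite /c; rewrite le_eqVlt; apply/orP; left; apply/eqP; ring.
move=> HV.
have key : v (h *: d + z) - v z <= h * (v y - v z - c + e) by nra.
apply: (le_trans (y := h^-1 * (h * (v y - v z - c + e)))).
  by apply: ler_wpM2l => //; rewrite invr_ge0 ltW.
by rewrite mulKf // gt_eqF.
Unshelve. all: by end_near.
Qed.
Lemma dotvNr (R : realType) k (u w : 'cV[R]_k) : dotv u (- w) = - dotv u w.
Proof. rewrite /dotv -sumrN; apply: eq_bigr => i _; rewrite !mxE; ring. Qed.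
Theorem lemma4p6 (R : realType) (n m : nat)
  (Nx : 'cV[R]_n -> R) (NY : 'cV[R]_m -> R)
  (Y : set 'cV[R]_m) (ghat : 'cV[R]_m -> R) (A : 'M[R]_(m, n))
  (F : 'cV[R]_n -> R) (normA : R)
  (v : 'cV[R]_m -> R) (sigma D : R) :
  is_norm Nx -> is_norm NY ->
  Y !=set0 -> convex_set Y -> compact Y ->
  {within Y, continuous ghat} -> convex_on Y ghat ->
  (forall x, is_max [set dotv (A *m x) y - ghat y | y in Y] (F x)) ->
  is_max [set r | exists x y, [/\ Nx x <= 1, NY y <= 1 &
                                    r = dotv (A *m x) y]] normA ->
  (forall z, Y z -> differentiable v z) ->
  0 < sigma -> strongly_convex_on Y NY sigma v ->
  is_max [set r | exists y z, [/\ Y y, Y z &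
                                    r = v y - v z - 'd v z (y - z)]] D ->
  forall (x0 x1 : 'cV[R]_n) (G : 'cV[R]_n), subdiff F x1 G ->
    F x0 - F x1 - dotv G (x0 - x1) <=
      2 * Num.sqrt (2 * normA ^+ 2 * D / sigma) * Nx (x0 - x1).
Proof.
move=> HX HY Yne cY cptY cg gc HF HA dv sp Hs HD x0 x1 G HG.
set d := x0 - x1.
have [[y0 Yy0 Ey0] _] := HF x0.
have [[y2 Yy2 Ey2] _] := HF (x1 - d).
have L0 : dotv (A *m x1) y0 - ghat y0 <= F x1 by apply: (HF x1).2; exists y0.
have L2 : dotv (A *m x1) y2 - ghat y2 <= F x1 by apply: (HF x1).2; exists y2.
have Gs := HG (x1 - d).
have E1 : x1 - d - x1 = - d by rewrite addrC addKr.
rewrite E1 dotvNr in Gs.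
have E2 : dotv (A *m d) (y0 - y2) = dotv (A *m x0) y0 - dotv (A *m x1) y0
   - (dotv (A *m x1) y2 - dotv (A *m (x1 - d)) y2).
  by rewrite dotvBr /d !mulmxBr !dotvBl; ring.
have key : F x0 - F x1 - dotv G d <= dotv (A *m d) (y0 - y2) by lra.
apply: (le_trans key); apply: (le_trans (@dot_bound R n m Nx NY A normA d (y0 - y2) HX HY HA)).
have nA0 : 0 <= normA.
  apply: HA.2; exists 0, 0; split; [by rewrite (@N0 R _ _ HX) ler01 | by rewrite (@N0 R _ _ HY) ler01 |].
  by rewrite mulmx0 dotv0l.
have dx0 : 0 <= Nx d by apply: Nge0.
have Hb := @breg R m NY Y v sigma y0 y2 (dv y2 Yy2) sp Hs Yy0 Yy2.
have HDb : v y0 - v y2 - 'd v y2 (y0 - y2) <= D by apply: HD.2; exists y0, y2.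
set N := NY (y0 - y2) in Hb *.
have N0' : 0 <= N by apply: Nge0.
have ND : N ^+ 2 <= 2 * D / sigma.
  rewrite ler_pdivlMr //; lra.
have NS : N <= Num.sqrt (2 * D / sigma).
  by rewrite -(ger0_norm N0') -sqrtr_sqr ler_sqrt // (le_trans _ ND) // sqr_ge0.
have SQ : Num.sqrt (2 * normA ^+ 2 * D / sigma) = normA * Num.sqrt (2 * D / sigma).
  rewrite (_ : 2 * normA ^+ 2 * D / sigma = normA ^+ 2 * (2 * D / sigma)); last by ring.
  by rewrite sqrtrM ?sqr_ge0 // sqrtr_sqr ger0_norm.
rewrite SQ.
have S0 : 0 <= Num.sqrt (2 * D / sigma) by apply: sqrtr_ge0.
have : normA * Nx d * N <= normA * Nx d * Num.sqrt (2 * D / sigma).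
  by apply: ler_wpM2l => //; apply: mulr_ge0.
have : 0 <= normA * Num.sqrt (2 * D / sigma) * Nx d by apply: mulr_ge0 => //; apply: mulr_ge0.
nra.
Qed.
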